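(* For every $n\in\mathcal{N}_{z_q}$, \[ \{\theta(\gamma):\gamma\in\Gamma_{z_q,n}\}=\Bigl\{\arg(x+iy)\ :\ x,y\in\mathbb{R},\ y+ix\in\mathcal{O}_K,\ N(y+ix)=n^2-4\lambda^4,\ 2y\equiv 2n \pmod{q}\Bigr\}, \] where $2y\equiv 2n\pmod q$ means $2y-2n\in q\mathbb{Z}$.
   Context: Let $q\in\{3,4,7,8,11,19,43,67,163\}$ and let $K$ be the imaginary quadratic field of discriminant $-q$ (class number one), with ring of integers $\mathcal{O}_K$ and norm $N$. Let $z_q=\mu+i\lambda$ where $\mu=0$ if $q\in\{4,8\}$, $\mu=1/2$ otherwise, and $\lambda=\sqrt{q}/2$ (so $\mathcal{O}_K=\mathbb{Z}+\mathbb{Z}z_q$). Let $\mathbb{H}$ be the upper half-plane with hyperbolic distance $\rho$, $\cosh\rho(z,w)=1+\frac{|z-w|^2}{2\,\mathrm{Im}(z)\mathrm{Im}(w)}$, and $\Gamma=\mathrm{PSL}(2,\mathbb{Z})$ acting by Möbius transformations. For $\gamma\in\Gamma$ set $\mathcal{R}(\gamma;z_q)=2\lambda^2\cosh\rho(z_q,\gamma z_q)$, $\mathcal{N}_{z_q}=\{\mathcal{R}(\gamma;z_q):\gamma\in\Gamma\}$, and $\Gamma_{z_q,n}=\{\gamma\in\Gamma:\mathcal{R}(\gamma;z_q)=n\}$. For $\gamma z_q\neq z_q$, $\theta(\gamma)\in\mathbb{R}/2\pi\mathbb{Z}$ is the angle that the tangent vector at $z_q$ of the geodesic segment from $z_q$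 to $\gamma z_q$ makes with the positive horizontal direction. *)

(* Defs.v *)
From Stdlib Require Import Reals List ZArith.
From Coquelicot Require Import Coquelicot.
Open Scope R_scope.

(* The nine admissible discriminants (class number one). *)
Definition admissible_q (q : nat) : Prop :=
  In q (3 :: 4 :: 7 :: 8 :: 11 :: 19 :: 43 :: 67 :: 163 :: nil)%nat.

Definition mu_q (q : nat) : R :=
  if (Nat.eqb q 4 || Nat.eqb q 8)%bool then 0 else 1/2.
Definition lambda_q (q : nat) : R := sqrt (INR q) / 2.
Definition z_q (q : nat) : C := (mu_q q, lambda_q q).

(* Elements of SL(2,Z); gamma and -gamma act identically on H, so
   quantifying over SL(2,Z) is the same as quantifying over PSL(2,Z). *)
Record SL2Z := mkSL2Z {
  ma : Z; mb : Z; mc : Z; md : Z;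
  mdet : (ma * md - mb * mc = 1)%Z }.

Definition ZtoC (k : Z) : C := RtoC (IZR k).

Definition moeb (g : SL2Z) (z : C) : C :=
  Cdiv (Cplus (Cmult (ZtoC (ma g)) z) (ZtoC (mb g)))
       (Cplus (Cmult (ZtoC (mc g)) z) (ZtoC (md g))).

(* cosh of the hyperbolic distance on the upper half plane. *)
Definition cosh_rho (z w : C) : R :=
  1 + (Cmod (Cminus z w)) ^ 2 / (2 * Im z * Im w).

Definition Rval (q : nat) (g : SL2Z) : R :=
  2 * (lambda_q q) ^ 2 * cosh_rho (z_q q) (moeb g (z_q q)).

Definition Nset (q : nat) (n : R) : Prop := exists g : SL2Z, Rval q g = n.

(* Tangent vector at z (in the upper half plane) of the hyperbolic geodesic
   segment from z to w (w <> z).  If Re w = Re z the geodesic is the vertical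
   line; otherwise it is the Euclidean semicircle centred at the point c of
   the real axis equidistant from z and w, and the tangent at z is
   perpendicular to z - c, oriented towards w (moving counterclockwise on the
   semicircle, i.e. direction i (z - c), decreases the real part). *)
Definition geod_tangent (z w : C) : C :=
  if Req_EM_T (Re w) (Re z) then
    (if Rlt_dec (Im z) (Im w) then (0, 1) else (0, -1))
  else
    let c := ((Re w) ^ 2 + (Im w) ^ 2 - (Re z) ^ 2 - (Im z) ^ 2)
             / (2 * (Re w - Re z)) in
    if Rlt_dec (Re w) (Re z) then Cmult Ci (Cminus z (RtoC c))
    else Cmult (Copp Ci) (Cminus z (RtoC c)).

(* t is an argument (angle with the positive horizontal direction) of the
   nonzero vector v; the set of such t is a class in R / 2 pi Z. *)
Definition is_arg (v : C) (t : R) : Prop :=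
  exists r : R, 0 < r /\ v = (r * cos t, r * sin t).

(* t represents theta(gamma) (requires gamma z_q <> z_q). *)
Definition is_theta (q : nat) (g : SL2Z) (t : R) : Prop :=
  is_arg (geod_tangent (z_q q) (moeb g (z_q q))) t.

(* O_K = Z + Z z_q, and the norm N(w) = |w|^2. *)
Definition in_OK (q : nat) (w : C) : Prop :=
  exists a b : Z, w = Cplus (ZtoC a) (Cmult (ZtoC b) (z_q q)).
Definition normK (w : C) : R := (Re w) ^ 2 + (Im w) ^ 2.

(* Main.v *)
Require Import Defs.
From Stdlib Require Import Reals List ZArith.
From Coquelicot Require Import Coquelicot.
From Stdlib Require Import Lra Lia Psatz Zwf.
Open Scope R_scope.

Open Scope Z_scope.


Definition sol (T N A B : Z) := exists a b c d : Z, a*d - b*c = 1 /\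
  c*c*N + c*d*T + d*d = A /\ 2*a*c*N + (a*d+b*c)*T + 2*b*d = - B.

Definition reduced_ok (T N : Z) := forall A B C, 1 <= A <= C -> -A <= B <= A ->
  B*B - 4*A*C = T*T - 4*N -> A = 1.

Lemma sol_T T N A B k : sol T N A B -> sol T N A (B - 2*k*A).
Proof.
  intros (a&b&c&d&H1&H2&H3). exists (a+k*c), (b+k*d), c, d.
  split; [nia|]. split; [nia|]. subst A. nia.
Qed.

Lemma sol_S T N A B C : A <> 0 -> B*B - 4*A*C = T*T - 4*N ->
  sol T N A B -> sol T N C (-B).
Proof.
  intros HA Hd (a&b&c&d&H1&H2&H3). exists c, d, (-a), (-b).
  split; [nia|]. split; [|nia].
  assert (E: B*B - 4*A*(a*a*N + a*b*T + b*b) = (a*d-b*c)^2*(T*T-4*N)).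
  { assert (B = -(2*a*c*N + (a*d+b*c)*T + 2*b*d)) by lia. subst B A. ring. }
  rewrite H1 in E. assert (A*(a*a*N+a*b*T+b*b - C) = 0) by nia.
  apply Z.mul_eq_0 in H. destruct H; [lia|]. nia.
Qed.

Lemma sol_base T N B C : (T = 0 \/ T = 1) -> B*B - 4*C = T*T - 4*N -> sol T N 1 B.
Proof.
  intros HT Hd.
  assert (Hp: exists m, B = 2*m + T).
  { destruct (Z.Even_or_Odd B) as [[m Hm]|[m Hm]]; destruct HT; subst.
    - exists m; lia.
    - exfalso; nia.
    - exfalso; nia.
    - exists m; lia. }
  destruct Hp as [m Hm].
  exists 1, (-m - T), 0, 1. split; [lia|]. split; [lia|]. destruct HT; subst; lia.
Qed.

Lemma class_one T N : (T = 0 \/ T = 1) -> reduced_ok T N ->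
  forall A B C, 0 < A -> B*B - 4*A*C = T*T - 4*N -> 0 < 4*N - T*T -> sol T N A B.
Proof.
  intros HT Hred A.
  induction A as [A IH] using (well_founded_induction (Zwf.Zwf_well_founded 0)).
  intros B C HA Hd Hq.
  set (B0 := B mod (2*A)).
  assert (HB0 : 0 <= B0 < 2*A) by (apply Z.mod_pos_bound; lia).
  assert (HBe : B = 2*A*(B/(2*A)) + B0) by (apply Z.div_mod; lia).
  set (k0 := B/(2*A)) in *.
  destruct (Z_le_gt_dec B0 A) as [Hle|Hgt].
  -
    set (B1 := B0). set (k := k0).
    assert (Hsuff: sol T N A B1 -> sol T N A B).
    { intro H. apply (sol_T _ _ _ _ (-k)) in H. rewrite HBe. unfold B1, k.
      replace (2*A*k0 + B0) with (B0 - 2*(-k0)*A) by ring. exact H. }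
    apply Hsuff. set (C1 := C - k*B1 - k*k*A).
    assert (Hd1 : B1*B1 - 4*A*C1 = T*T - 4*N) by (unfold C1, B1, k; nia).
    destruct (Z_lt_le_dec C1 A) as [Hc|Hc].
    + assert (HC1: 0 < C1) by nia.
      assert (Hs: sol T N C1 (-B1)).
      { apply (IH C1) with (C := A); [unfold Zwf; lia | lia | nia | lia]. }
      assert (Hs2 := sol_S T N C1 (-B1) A ltac:(lia) ltac:(nia) Hs). now rewrite Z.opp_involutive in Hs2.
    + assert (A = 1) by (apply (Hred A B1 C1); lia). subst A.
      apply sol_base with (C := C1); try exact HT; lia.
  - set (B1 := B0 - 2*A). set (k := k0 + 1).
    assert (Hsuff: sol T N A B1 -> sol T N A B).
    { intro H. apply (sol_T _ _ _ _ (-k)) in H. rewrite HBe. unfold B1, k in *.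
      replace (2*A*k0 + B0) with (B0 - 2*A - 2*(-(k0+1))*A) by ring. exact H. }
    apply Hsuff. set (C1 := C - k*B1 - k*k*A).
    assert (Hd1 : B1*B1 - 4*A*C1 = T*T - 4*N) by (unfold C1, B1, k; nia).
    destruct (Z_lt_le_dec C1 A) as [Hc|Hc].
    + assert (HC1: 0 < C1) by nia.
      assert (Hs: sol T N C1 (-B1)).
      { apply (IH C1) with (C := A); [unfold Zwf; lia | lia | nia | lia]. }
      assert (Hs2 := sol_S T N C1 (-B1) A ltac:(lia) ltac:(nia) Hs). now rewrite Z.opp_involutive in Hs2.
    + assert (A = 1) by (apply (Hred A B1 C1); unfold B1 in *; lia). subst A.
      apply sol_base with (C := C1); try exact HT; lia.
Qed.
Ltac red_tac :=
  let A := fresh "A" in let B := fresh "B" in let C := fresh "C" in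
  intros A B C H1 H2 H3;
  assert (HA7 : A <= 7) by nia;
  assert (HAc : A = 1 \/ A = 2 \/ A = 3 \/ A = 4 \/ A = 5 \/ A = 6 \/ A = 7) by lia;
  assert (HBc : B = -7 \/ B = -6 \/ B = -5 \/ B = -4 \/ B = -3 \/ B = -2 \/ B = -1 \/ B = 0 \/
     B = 1 \/ B = 2 \/ B = 3 \/ B = 4 \/ B = 5 \/ B = 6 \/ B = 7) by lia;
  clear HA7; intuition subst; lia.

Close Scope Z_scope.
Open Scope R_scope.
Lemma Dpos (c d : R) mu lam : 0 < lam -> (c <> 0 \/ d <> 0) ->
  0 < (c * mu + d)^2 + (c * lam)^2.
Proof.
  intros Hl Hcd. destruct (Req_dec c 0) as [->|Hc].
  - destruct Hcd as [H|H]; [lra|]. replace (0*mu + d) with d by ring.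
    pose proof (Rsqr_pos_lt d H). unfold Rsqr in *.
    replace (d^2 + (0*lam)^2) with (d*d) by ring. lra.
  - pose proof (Rsqr_pos_lt c Hc). unfold Rsqr in *.
    assert (0 < (c*lam)^2) by (replace ((c*lam)^2) with ((c*c)*(lam*lam)) by ring;
      apply Rmult_lt_0_compat; nra).
    assert (0 <= (c*mu+d)^2) by (apply pow2_ge_0). lra.
Qed.

Lemma moeb_formula (g : SL2Z) mu lam : 0 < lam ->
  let a := IZR (ma g) in let b := IZR (mb g) in
  let c := IZR (mc g) in let d := IZR (md g) in
  let D := (c * mu + d)^2 + (c * lam)^2 in
  moeb g (mu, lam) = (((a*mu+b)*(c*mu+d) + a*c*lam^2)/D, lam / D).
Proof.
  intros Hl a b c d D.
  assert (Hdet : a*d - b*c = 1).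
  { unfold a,b,c,d. destruct g as [a0 b0 c0 d0 H]; simpl.
    rewrite <- mult_IZR, <- mult_IZR, <- minus_IZR, H. reflexivity. }
  assert (HD : 0 < D).
  { apply Dpos; auto. destruct (Req_dec c 0); [right|left; auto].
    intro Hd0. rewrite H, Hd0 in Hdet. lra. }
  cbv [moeb ZtoC Cdiv Cmult Cplus Cinv RtoC fst snd]. fold a b c d.
  replace ((c * mu - 0 * lam + d) ^ 2 + (c * lam + 0 * mu + 0) ^ 2) with D
    by (unfold D; ring).
  f_equal.
  - field. lra.
  - transitivity (lam * (a*d - b*c) / D). field; lra. rewrite Hdet. field; lra.
Qed.
Ltac cnra := repeat match goal with H: (_,_) <> (_,_) |- _ => clear H end; nra.
Section Core.
Variables mu lam A B C : R.
Hypothesis Hl : 0 < lam.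
Hypothesis HA : 0 < A.
Hypothesis Hd : B^2 - 4*A*C = -4*lam^2.

Let u := -B/(2*A).
Let v := lam/A.
Let n := C + A*(mu^2+lam^2) + B*mu.
Let y := A*(mu^2-lam^2)+B*mu+C.
Let x := -lam*(2*A*mu+B).

Lemma HC : C = (B^2 + 4*lam^2)/(4*A).
Proof. field_simplify_eq; [lra | lra]. Qed.

Lemma core_n : n = 2*lam^2 + A*((mu-u)^2 + (lam-v)^2).
Proof. unfold n, u, v. rewrite HC. field. lra. Qed.

Lemma core_cosh : 2*lam^2 * cosh_rho (mu,lam) (u,v) = n.
Proof.
  rewrite core_n. cbv [cosh_rho Cmod Cminus Cplus Copp Im Re fst snd].
  rewrite pow2_sqrt by (apply Rplus_le_le_0_compat; apply pow2_ge_0). unfold v. field. split; lra.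
Qed.

Lemma core_norm : y^2 + x^2 = n^2 - 4*lam^4.
Proof. unfold y, x, n. rewrite HC. field. lra. Qed.

Lemma core_ge : 2*lam^2 <= n.
Proof. rewrite core_n.
  assert (0 <= (mu-u)^2+(lam-v)^2) by (apply Rplus_le_le_0_compat; apply pow2_ge_0).
  assert (0 <= A * ((mu-u)^2+(lam-v)^2)) by (apply Rmult_le_pos; lra). lra. Qed.

Lemma sq0 (a b : R) : a^2 + b^2 = 0 -> a = 0 /\ b = 0.
Proof. intro H. replace (a^2) with (a*a) in H by ring. replace (b^2) with (b*b) in H by ring.
  pose proof (Rle_0_sqr a). pose proof (Rle_0_sqr b). unfold Rsqr in *.
  split; (destruct (Req_dec a 0) as [Ha|Ha]; [|pose proof (Rsqr_pos_lt _ Ha)]);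
  (destruct (Req_dec b 0) as [Hb|Hb]; [|pose proof (Rsqr_pos_lt _ Hb)]); unfold Rsqr in *; lra. Qed.

Lemma core_eq : (u, v) = (mu, lam) <-> (x, y) = (0, 0).
Proof.
  split.
  - intro H. injection H as H1 H2.
    assert (Hn : n = 2*lam^2) by (rewrite core_n, H1, H2; ring).
    assert (Hz : y^2 + x^2 = 0) by (rewrite core_norm, Hn; ring).
    destruct (sq0 _ _ Hz). rewrite H, H0. reflexivity.
  - intro H. injection H as H1 H2.
    assert (Hz : y^2 + x^2 = 0) by (rewrite H1, H2; ring). rewrite core_norm in Hz.
    assert (Hn : n = 2*lam^2).
    { pose proof core_ge. assert (Hp : (n - 2*lam^2)*(n+2*lam^2) = 0) by (rewrite <- Hz; ring).
      destruct (Rmult_integral _ _ Hp) as [Hq|Hq]; [lra|].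
      assert (0 < lam^2) by (apply pow_lt; lra). lra. }
    pose proof core_n as Hc. assert (Hs : (mu-u)^2 + (lam-v)^2 = 0).
    { assert (Hm : A*((mu-u)^2 + (lam-v)^2) = 0) by lra.
      destruct (Rmult_integral _ _ Hm); lra. }
    destruct (sq0 _ _ Hs). f_equal; lra.
Qed.

Lemma core_tangent : (u, v) <> (mu, lam) ->
  exists r, 0 < r /\ geod_tangent (mu, lam) (u, v) = (r * x, r * y).
Proof.
  intro Hne. unfold geod_tangent; cbv [Re Im fst snd].
  destruct (Req_EM_T u mu) as [Hu|Hu].
  - assert (Hx : x = 0) by (unfold x; unfold u in Hu; field_simplify_eq in Hu; cnra).
    assert (Hy : y = lam^2*(1 - A^2)/A).
    { unfold y. rewrite HC. unfold u in Hu. assert (B = -2*A*mu) by (field_simplify_eq in Hu; lra).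
      rewrite H. field. lra. }
    destruct (Rlt_dec lam v) as [Hv|Hv].
    + exists (/y). assert (A < 1).
      { unfold v in Hv. apply Rmult_lt_reg_r with lam; auto.
        apply Rmult_lt_reg_l with (/A). apply Rinv_0_lt_compat; auto.
        replace (/A * (A*lam)) with lam by (field; lra). lra. }
      assert (0 < y). { rewrite Hy. apply Rdiv_lt_0_compat; [|lra]. apply Rmult_lt_0_compat; [apply pow_lt; lra|]. clear -HA H. nra. }
      split; [apply Rinv_0_lt_compat; auto|]. rewrite Hx. f_equal; field; lra.
    + assert (A <> 1).
      { intro HA1. apply Hne. unfold v. rewrite Hu, HA1. f_equal. field. }
      assert (1 < A).
      { destruct (Rlt_or_le A 1); [|lra]. exfalso. apply Hv. unfold v.
        apply Rmult_lt_reg_l with A; auto. replace (A*(lam/A)) with lam by (field; lra). clear -Hl HA H0; nra. }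
      assert (y < 0). { rewrite Hy. unfold Rdiv. assert (lam^2*(1-A^2) < 0) by (clear -Hl HA H0; assert (0<lam^2) by (apply pow_lt; lra); assert (0 < A^2-1) by nra; assert (0 < lam^2*(A^2-1)) by (apply Rmult_lt_0_compat; lra); lra).
        assert (0 < /A) by (apply Rinv_0_lt_compat; auto). clear -H1 H2; nra. }
      exists (-/y). split. { assert (0 < / - y) by (apply Rinv_0_lt_compat; lra).
        rewrite <- Rinv_opp. auto. }
      rewrite Hx. f_equal; field; lra.
  - set (c := (u^2 + v^2 - mu^2 - lam^2)/(2*(u-mu))).
    assert (Hu' : u - mu <> 0) by lra.
    assert (Hy : y = 2*A*(mu-u)*(mu - c)).
    { unfold c, y. rewrite HC. unfold u, v in *. field. split; [lra|]. intro E; apply Hu'. replace (-B) with (mu*(2*A)) by lra. field. lra. }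
    assert (Hx : x = -2*A*lam*(mu - u)). { unfold x, u. field. lra. }
    destruct (Rlt_dec u mu) as [Hlt|Hlt].
    + exists (/(2*A*(mu-u))). split. { apply Rinv_0_lt_compat. cnra. }
      cbv [Cmult Cminus Cplus Copp Ci RtoC fst snd]. rewrite Hx, Hy. f_equal; field; lra.
    + exists (/(2*A*(u-mu))). split. { apply Rinv_0_lt_compat. cnra. }
      cbv [Cmult Cminus Cplus Copp Ci RtoC fst snd]. rewrite Hx, Hy. f_equal; field; lra.
Qed.
End Core.

Lemma qdata q : admissible_q q -> exists T N : Z, (T = 0 \/ T = 1)%Z /\
  INR q = IZR (4*N - T*T) /\ mu_q q = IZR T / 2 /\ reduced_ok T N /\ (0 < 4*N - T*T)%Z.
Proof.
  unfold admissible_q; simpl.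
  intros [H|[H|[H|[H|[H|[H|[H|[H|[H|[]]]]]]]]]]; subst q.
  - exists 1%Z, 1%Z. rewrite INR_IZR_INZ. unfold mu_q; simpl. repeat split; try lia; try lra.
    red_tac.
  - exists 0%Z, 1%Z. rewrite INR_IZR_INZ. unfold mu_q; simpl. repeat split; try lia; try lra.
    red_tac.
  - exists 1%Z, 2%Z. rewrite INR_IZR_INZ. unfold mu_q; simpl. repeat split; try lia; try lra.
    red_tac.
  - exists 0%Z, 2%Z. rewrite INR_IZR_INZ. unfold mu_q; simpl. repeat split; try lia; try lra.
    red_tac.
  - exists 1%Z, 3%Z. rewrite INR_IZR_INZ. unfold mu_q; simpl. repeat split; try lia; try lra.
    red_tac.
  - exists 1%Z, 5%Z. rewrite INR_IZR_INZ. unfold mu_q; simpl. repeat split; try lia; try lra.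
    red_tac.
  - exists 1%Z, 11%Z. rewrite INR_IZR_INZ. unfold mu_q; simpl. repeat split; try lia; try lra.
    red_tac.
  - exists 1%Z, 17%Z. rewrite INR_IZR_INZ. unfold mu_q; simpl. repeat split; try lia; try lra.
    red_tac.
  - exists 1%Z, 41%Z. rewrite INR_IZR_INZ. unfold mu_q; simpl. repeat split; try lia; try lra.
    red_tac.
Qed.

Definition gA (T N : Z) (g : SL2Z) : Z := (mc g * mc g * N + mc g * md g * T + md g * md g)%Z.
Definition gB (T N : Z) (g : SL2Z) : Z :=
  (- (2 * ma g * mc g * N + (ma g * md g + mb g * mc g) * T + 2 * mb g * md g))%Z.
Definition gC (T N : Z) (g : SL2Z) : Z := (ma g * ma g * N + ma g * mb g * T + mb g * mb g)%Z.

Lemma g_disc T N g : ((gB T N g)*(gB T N g) - 4*(gA T N g)*(gC T N g) = T*T - 4*N)%Z.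
Proof.
  destruct g as [a b c d H]; unfold gA, gB, gC; cbn [ma mb mc md].
  transitivity ((a*d-b*c)^2*(T*T-4*N))%Z; [ring|]. rewrite H. ring.
Qed.

Ltac pushIZR := repeat rewrite ?plus_IZR, ?mult_IZR, ?minus_IZR, ?opp_IZR.

Lemma moeb_w (T N : Z) (mu lam : R) g : 0 < lam -> mu = IZR T / 2 ->
  lam^2 = IZR N - mu^2 ->
  0 < IZR (gA T N g) /\
  moeb g (mu, lam) = (- IZR (gB T N g) / (2 * IZR (gA T N g)), lam / IZR (gA T N g)).
Proof.
  intros Hl Hmu Hl2.
  pose proof (moeb_formula g mu lam Hl) as HF. cbv zeta in HF.
  set (a := IZR (ma g)) in *. set (b := IZR (mb g)) in *.
  set (c := IZR (mc g)) in *. set (d := IZR (md g)) in *.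
  assert (Hdet : a*d - b*c = 1).
  { unfold a,b,c,d. destruct g as [a0 b0 c0 d0 H]; simpl.
    rewrite <- mult_IZR, <- mult_IZR, <- minus_IZR, H. reflexivity. }
  assert (HA : IZR (gA T N g) = (c * mu + d)^2 + (c * lam)^2).
  { unfold gA. pushIZR. fold a b c d.
    replace ((c*lam)^2) with (c^2 * lam^2) by ring. rewrite Hl2, Hmu. field. }
  assert (HB : - IZR (gB T N g) / 2 = (a*mu+b)*(c*mu+d) + a*c*lam^2).
  { unfold gB. pushIZR. fold a b c d. rewrite Hl2, Hmu. field. }
  assert (HD : 0 < (c * mu + d)^2 + (c * lam)^2).
  { apply Dpos; auto. destruct (Req_dec c 0); [right|left; auto].
    intro Hd0. rewrite H, Hd0 in Hdet. lra. }
  split. { rewrite HA; exact HD. }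
  rewrite HF, HA. f_equal.
  replace (- IZR (gB T N g)) with (2*((a*mu+b)*(c*mu+d) + a*c*lam^2)) by lra. field. lra.
Qed.

Lemma is_arg_scale v1 v2 r t : 0 < r -> is_arg (v1, v2) t -> is_arg (r*v1, r*v2) t.
Proof.
  intros Hr [s [Hs E]]. injection E as E1 E2. exists (r*s). split.
  - apply Rmult_lt_0_compat; auto.
  - rewrite E1, E2. f_equal; ring.
Qed.

Lemma is_arg_unscale v1 v2 r t : 0 < r -> is_arg (r*v1, r*v2) t -> is_arg (v1, v2) t.
Proof.
  intros Hr H. apply (is_arg_scale _ _ (/r)) in H; [|apply Rinv_0_lt_compat; auto].
  replace (/r * (r*v1)) with v1 in H by (field; lra).
  replace (/r * (r*v2)) with v2 in H by (field; lra). exact H.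
Qed.

Theorem proposition1p2 (q : nat) (Hq : admissible_q q) (n : R)
  (Hn : Nset q n) (t : R) :
  (exists g : SL2Z, Rval q g = n /\ moeb g (z_q q) <> z_q q /\ is_theta q g t)
  <->
  (exists x y : R,
      in_OK q (y, x) /\
      normK (y, x) = n ^ 2 - 4 * (lambda_q q) ^ 4 /\
      (exists k : Z, 2 * y - 2 * n = IZR k * INR q) /\
      (x, y) <> (0, 0) /\
      is_arg (x, y) t).
Proof.
  destruct (qdata q Hq) as (T & N & HT & Hqr & Hmu & Hred & Hqpos).
  assert (Hqr' : INR q = 4*IZR N - IZR T ^2) by (rewrite Hqr; pushIZR; ring).
  assert (Hqp : 0 < INR q) by (rewrite Hqr; apply IZR_lt; exact Hqpos).
  assert (Hz : z_q q = (mu_q q, lambda_q q)) by reflexivity.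
  set (mu := mu_q q) in *. set (lam := lambda_q q) in *.
  assert (Hl : 0 < lam).
  { unfold lam, lambda_q. apply Rdiv_lt_0_compat; [apply sqrt_lt_R0; auto | lra]. }
  assert (Hl2 : lam^2 = INR q / 4).
  { unfold lam, lambda_q. unfold Rdiv. rewrite Rpow_mult_distr, pow2_sqrt by lra. field. }
  assert (Hl2' : lam^2 = IZR N - mu^2) by (rewrite Hl2, Hqr', Hmu; field).
  assert (Kg : forall g, 0 < IZR (gA T N g) /\
     moeb g (mu, lam) = (- IZR (gB T N g) / (2 * IZR (gA T N g)), lam / IZR (gA T N g)) /\
     IZR (gB T N g) ^ 2 - 4 * IZR (gA T N g) * IZR (gC T N g) = -4 * lam^2).
  { intro g. destruct (moeb_w T N mu lam g Hl Hmu Hl2') as [H1 H2]. split; [auto|split; [auto|]].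
    pose proof (g_disc T N g) as HD. apply (f_equal IZR) in HD. revert HD. pushIZR.
    intro HD. replace (IZR (gB T N g) ^ 2) with (IZR (gB T N g) * IZR (gB T N g)) by ring.
    rewrite HD. rewrite Hl2, Hqr'. field. }
  assert (Hnpos : 0 < n).
  { destruct Hn as [g0 Hg0]. unfold Rval in Hg0. rewrite Hz in Hg0. fold mu lam in Hg0.
    destruct (Kg g0) as (HA & Hw & Hd). rewrite Hw in Hg0.
    rewrite (core_cosh mu lam _ _ _ Hl HA Hd) in Hg0. pose proof (core_ge mu lam _ _ _ HA Hd).
    assert (0 < lam^2) by (apply pow_lt; auto). lra. }
  unfold is_theta, Rval. rewrite Hz. fold mu lam.
  split.
  - intros (g & Hr & Hne & Hth). destruct (Kg g) as (HA & Hw & Hd). rewrite Hw in *.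
    set (A := IZR (gA T N g)) in *. set (B := IZR (gB T N g)) in *. set (C := IZR (gC T N g)) in *.
    rewrite (core_cosh mu lam _ _ _ Hl HA Hd) in Hr.
    exists (-lam*(2*A*mu+B)), (A*(mu^2-lam^2)+B*mu+C).
    split; [|split; [|split; [|split]]].
    + exists ((gA T N g * T + gB T N g) * T + gC T N g - gA T N g * N)%Z.
      exists (- (gA T N g * T + gB T N g))%Z.
      rewrite Hz. fold mu lam. cbv [Cplus Cmult ZtoC RtoC fst snd].
      pushIZR. fold A B C. f_equal.
      * rewrite Hl2', Hmu. field.
      * rewrite Hmu. field.
    + unfold normK. cbv [Re Im fst snd]. rewrite <- Hr. apply core_norm; auto.
    + exists (- gA T N g)%Z. pushIZR. fold A. rewrite <- Hr.
      replace (INR q) with (4*lam^2) by lra. ring.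
    + intro E. apply Hne. apply (core_eq mu lam A B C Hl HA Hd). exact E.
    + destruct (core_tangent mu lam A B C Hl HA Hd Hne) as (r & Hrp & Ht).
      rewrite Ht in Hth. apply is_arg_unscale with r; auto.
  - intros (x & y & HOK & Hnorm & (k & Hk) & Hnz & Harg).
    destruct HOK as (a' & b' & E). rewrite Hz in E. fold mu lam in E.
    cbv [Cplus Cmult ZtoC RtoC fst snd] in E. injection E as Ey Ex.
    set (Az := (- k)%Z). set (Bz := (- b' - Az * T)%Z). set (Cz := (a' + b' * T + Az * N)%Z).
    set (A := IZR Az). set (B := IZR Bz). set (C := IZR Cz).
    assert (HAk : A = - IZR k) by (unfold A, Az; apply opp_IZR).
    assert (HB : B = - IZR b' - A * IZR T) by (unfold B, Bz; pushIZR; fold A; ring).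
    assert (HC : C = IZR a' + IZR b' * IZR T + A * IZR N) by (unfold C, Cz; pushIZR; fold A; ring).
    assert (Hx : x = -lam*(2*A*mu+B)) by (rewrite Ex, HB, Hmu; field).
    assert (Hy : y = A*(mu^2-lam^2)+B*mu+C) by (rewrite Ey, HB, HC, Hl2', Hmu; field).
    assert (Hn' : n = C + A*(mu^2+lam^2) + B*mu).
    { assert (Hyn : y = n - 2*A*lam^2).
      { rewrite HAk. replace (INR q) with (4*lam^2) in Hk by lra. lra. }
      rewrite Hy in Hyn. rewrite Hl2' in *. lra. }
    assert (Hd : B^2 - 4*A*C = -4*lam^2).
    { assert (Hid : y^2 + x^2 - (n^2 - 4*lam^4) = lam^2 * (B^2 - 4*A*C + 4*lam^2)).
      { rewrite Hx, Hy, Hn'. ring. }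
      unfold normK in Hnorm. cbv [Re Im fst snd] in Hnorm. rewrite Hnorm in Hid.
      replace (n ^ 2 - 4 * lam ^ 4 - (n ^ 2 - 4 * lam ^ 4)) with 0 in Hid by ring.
      symmetry in Hid. apply Rmult_integral in Hid. destruct Hid as [Hid|Hid].
      - assert (0 < lam^2) by (apply pow_lt; auto). lra.
      - lra. }
    assert (HApos : 0 < A).
    { assert (Hyn : y < n).
      { destruct (Rlt_or_le y n) as [|Hge]; auto. exfalso.
        unfold normK in Hnorm. cbv [Re Im fst snd] in Hnorm.
        assert (n^2 <= y^2) by (apply pow_incr; lra).
        assert (0 <= x^2) by apply pow2_ge_0.
        assert (0 < lam^4) by (apply pow_lt; auto). lra. }
      assert (Hyn2 : y = n - 2*A*lam^2).
      { rewrite Hy, Hn'. ring. }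
      assert (0 < lam^2) by (apply pow_lt; auto).
      destruct (Rlt_or_le 0 A) as [|HA0]; auto. exfalso.
      assert (A*lam^2 <= 0) by (apply Rmult_le_0_r; lra). lra. }
    assert (HAz : (0 < Az)%Z) by (apply lt_IZR; exact HApos).
    assert (HdZ : (Bz*Bz - 4*Az*Cz = T*T - 4*N)%Z).
    { apply eq_IZR. pushIZR. fold A B C.
      replace (B*B) with (B^2) by ring. rewrite Hd, Hl2, Hqr'. field. }
    destruct (class_one T N HT Hred Az Bz Cz HAz HdZ Hqpos) as (a & b & c & d & Hdet & H1 & H2).
    set (g := mkSL2Z a b c d Hdet).
    destruct (Kg g) as (_ & Hw & _).
    assert (HgA : gA T N g = Az) by (unfold gA; cbn [g ma mb mc md]; exact H1).
    assert (HgB : gB T N g = Bz) by (unfold gB; cbn [g ma mb mc md]; lia).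
    rewrite HgA, HgB in Hw. fold A B in Hw.
    exists g. rewrite Hw. split; [|split].
    + rewrite (core_cosh mu lam _ _ _ Hl HApos Hd). symmetry; exact Hn'.
    + intro E. apply Hnz. rewrite Hx, Hy. apply (core_eq mu lam A B C Hl HApos Hd). exact E.
    + assert (Hne : (- B / (2 * A), lam / A) <> (mu, lam)).
      { intro E. apply Hnz. rewrite Hx, Hy. apply (core_eq mu lam A B C Hl HApos Hd). exact E. }
      destruct (core_tangent mu lam A B C Hl HApos Hd Hne) as (r & Hrp & Ht).
      rewrite Ht. rewrite Hx, Hy in Harg. apply is_arg_scale; auto.
Qed.
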